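(* Let $(\mathcal{P},\sim)$ be a noncommutative uniform family of posets, let $H(\mathcal{P})$ be its incidence Hopf algebra with antipode $S$, let $x_n$ ($n\ge1$) be the unique indecomposable type of rank $n$ and $x_0=1$, and let $W_{n,k}$ be the rank polynomials. For $n\ge1$ let $M_n$ be the $n\times n$ matrix whose $(i,j)$ entry is $W_{n-i+1,\,n-j}$ (so its subdiagonal entries are $W_{m,m}=1$ and entries below the subdiagonal are $0$). Then $$S(x_n)=-\,|M_n|_{1n},$$ where $|\cdot|_{1n}$ is the quasideterminant computed at the top right entry (equivalently, $S(x_n)=|-M_n|_{1n}$).
   Context: All posets are finite with a unique minimal element $0_P$ and a unique maximal element $1_P$; the interval $[x,y]$ is $\{z: x\le z\le y\}$. Let $\mathcal{P}$ be a family of such posets that is interval closed (every interval of a member is a member) and hereditary (closed under direct product $P\times Q$ with componentwise order). Let $\sim$ be an equivalence relation on $\mathcal{P}$ that is order-compatible (if $P\sim Q$ there is a bijection $\varphi:P\to Q$ with $[0_P,x]\sim[0_Q,\varphi(x)]$ and $[x,1_P]\sim[\varphi(x),1_Q]$ for all $x\in P$), compatible with direct products ($P\sim P'$, $Q\sim Q'$ imply $P\times Q\sim P'\times Q'$), and reduced ($P\times Q\sim Q\times P\sim P$ whenever $Q$ has one element); it is not assumed that $P\times Q\sim Q\times P$ in general. Write $\overline{P}$ for the class of $P$. The incidence Hopf algebra $H(\mathcal{P})$ is the $\mathbb{K}$-vector space with basis the classes, product $\overline{P}\,\overline{Q}=\overline{P\times Q}$, unit the class of a one-point poset, coproduct $\Delta(\overline{P})=\sum_{x\in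 P}\overline{[0_P,x]}\otimes\overline{[x,1_P]}$, and counit $\varepsilon(\overline{P})=1$ if $|P|=1$ and $0$ otherwise; it is a Hopf algebra. A class is indecomposable if it is not the class of a product $P\times Q$ with $P,Q$ both of cardinality $>1$. A poset is graded if all its maximal chains have the same number of cover steps, called its rank. A (noncommutative) uniform family is such $(\mathcal{P},\sim)$ consisting of graded posets with: (1) if $\overline{P}$ is indecomposable and $y\in P$, $y<1_P$, then $\overline{[y,1_P]}$ is indecomposable; (2) for every $n\ge1$ there is exactly one indecomposable class of rank $n$. Rank polynomials: $W_{0,0}=1$, and for $n\ge1$, choosing $[x,y]$ in the class $x_n$, $W_{n,k}=\sum_{z\in[x,y],\ \mathrm{rank}[z,y]=k}\overline{[x,z]}$; then $W_{n,n}=1$, $W_{n,0}=x_n$, $W_{n,k}=0$ for $n<k$, and $\Delta(x_n)=\sum_{k\ge0}W_{n,k}\otimes x_k$. Quasideterminant: for an $n\times n$ matrix $A=(a_{ij})$ over a noncommutative ring, with $A^{pq}$ the matrix with row $p$ and column $q$ deleted (original indices kept), $|A|_{11}=a_{11}$ if $n=1$ and $|A|_{pq}=a_{pq}-\sum_{i\ne p,j\ne q}a_{pj}(|A^{pq}|_{ij})^{-1}a_{iq}$; for $A$ with $a_{i+1,i}=-1$ and $a_{ij}=0$ for $i>j+1$ this equals $a_{1n}+\sum_{k\ge1}\sum_{1\le j_1<\cdots<j_k<n}a_{1j_1}a_{j_1+1,j_2}\cdots a_{j_k+1,n}$. *)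

(* Defs.v *)
From HB Require Import structures.
From mathcomp Require Import all_boot all_order all_algebra.
Set Implicit Arguments. Unset Strict Implicit. Unset Printing Implicit Defensive.
Import GRing.Theory.
Local Open Scope ring_scope.

Record FinPoset : Type := FinPosetPack {
  pcar :> finType;
  ple : rel pcar;
  ple_refl : reflexive ple;
  ple_anti : antisymmetric ple;
  ple_trans : transitive ple;
  pbot : pcar;
  ptop : pcar;
  pbot_min : forall z, ple pbot z;
  ptop_max : forall z, ple z ptop }.

Section Interval.
Variables (P : FinPoset) (x y : P) (hxy : @ple P x y).
Definition int_car : finType := {z : P | @ple P x z && @ple P z y}.
Definition int_le : rel int_car := fun a b => @ple P (val a) (val b).
Lemma int_le_refl : reflexive int_le.
Proof. by move=> a; exact: ple_refl. Qed.
Lemma int_le_anti : antisymmetric int_le.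
Proof. by move=> a b h; apply: val_inj; exact: ple_anti. Qed.
Lemma int_le_trans : transitive int_le.
Proof. by move=> a b c; exact: ple_trans. Qed.
Lemma int_bot_mem : @ple P x x && @ple P x y.
Proof. by rewrite ple_refl hxy. Qed.
Lemma int_top_mem : @ple P x y && @ple P y y.
Proof. by rewrite ple_refl hxy. Qed.
Definition int_bot : int_car := exist _ x int_bot_mem.
Definition int_top : int_car := exist _ y int_top_mem.
Lemma int_bot_min z : int_le int_bot z.
Proof. by case: z => z hz; case/andP: (hz). Qed.
Lemma int_top_max z : int_le z int_top.
Proof. by case: z => z hz; case/andP: (hz). Qed.
Definition interval : FinPoset :=
  FinPosetPack int_le_refl int_le_anti int_le_trans int_bot_min int_top_max.
End Interval.

Definition lower (P : FinPoset) (x : P) : FinPoset := interval (pbot_min x).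
Definition upper (P : FinPoset) (x : P) : FinPoset := interval (ptop_max x).

Section Product.
Variables P Q : FinPoset.
Definition prod_car : finType := (pcar P * pcar Q)%type.
Definition prod_le : rel prod_car :=
  fun a b => @ple P a.1 b.1 && @ple Q a.2 b.2.
Lemma prod_le_refl : reflexive prod_le.
Proof. by move=> a; rewrite /prod_le !ple_refl. Qed.
Lemma prod_le_anti : antisymmetric prod_le.
Proof.
move=> [a1 a2] [b1 b2] /andP[/andP[h1 h2] /andP[h3 h4]].
have e1 : a1 = b1 by apply: ple_anti; rewrite h1 h3.
have e2 : a2 = b2 by apply: ple_anti; rewrite h2 h4.
by rewrite e1 e2.
Qed.
Lemma prod_le_trans : transitive prod_le.
Proof.
move=> b a c /andP[h1 h2] /andP[h3 h4].
by rewrite /prod_le (ple_trans h1 h3) (ple_trans h2 h4).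
Qed.
Lemma prod_bot_min z : prod_le (pbot P, pbot Q) z.
Proof. by rewrite /prod_le !pbot_min. Qed.
Lemma prod_top_max z : prod_le z (ptop P, ptop Q).
Proof. by rewrite /prod_le !ptop_max. Qed.
Definition prodP : FinPoset :=
  FinPosetPack prod_le_refl prod_le_anti prod_le_trans prod_bot_min prod_top_max.
End Product.

Definition pcover (P : FinPoset) : rel P := fun x y =>
  [&& x != y, @ple P x y &
      [forall z : P, ~~ [&& z != x, z != y, @ple P x z & @ple P z y]]].

(* There is a maximal chain 0_P = z_0 < z_1 < ... < z_k = 1_P with k cover
   steps (in a finite bounded poset maximal chains are exactly such
   saturated chains from 0_P to 1_P). *)
Definition has_max_chain (P : FinPoset) (k : nat) : bool :=
  [exists s : k.-tuple P, path (@pcover P) (pbot P) s && (last (pbot P) s == ptop P)].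

Definition graded (P : FinPoset) : Prop :=
  forall k1 k2, has_max_chain P k1 -> has_max_chain P k2 -> k1 = k2.

Definition has_rank (P : FinPoset) (k : nat) : Prop := graded P /\ has_max_chain P k.

Section Family.
Variables (Fam : FinPoset -> Prop) (eqv : FinPoset -> FinPoset -> Prop).

Definition interval_closed : Prop :=
  forall P : FinPoset, Fam P -> forall (x y : P) (h : @ple P x y), Fam (interval h).

Definition hereditary : Prop :=
  forall P Q, Fam P -> Fam Q -> Fam (prodP P Q).

Definition equivalence_on : Prop :=
  [/\ forall P, Fam P -> eqv P P,
      forall P Q, Fam P -> Fam Q -> eqv P Q -> eqv Q P &
      forall P Q R, Fam P -> Fam Q -> Fam R -> eqv P Q -> eqv Q R -> eqv P R].

Definition order_compatible : Prop :=
  forall P Q, Fam P -> Fam Q -> eqv P Q ->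
    exists phi : P -> Q, bijective phi /\
      forall x : P, eqv (lower x) (lower (phi x)) /\ eqv (upper x) (upper (phi x)).

Definition product_compatible : Prop :=
  forall P P' Q Q', Fam P -> Fam P' -> Fam Q -> Fam Q' ->
    eqv P P' -> eqv Q Q' -> eqv (prodP P Q) (prodP P' Q').

Definition reduced : Prop :=
  forall P Q, Fam P -> Fam Q -> #|pcar Q| = 1%N ->
    eqv (prodP P Q) P /\ eqv (prodP Q P) P.

Definition indecomposable (P : FinPoset) : Prop :=
  ~ exists Q R, [/\ Fam Q, Fam R, (1 < #|pcar Q|)%N, (1 < #|pcar R|)%N &
                    eqv P (prodP Q R)].

Definition uniform_family : Prop :=
  [/\ interval_closed, hereditary, equivalence_on, order_compatible &
      [/\ product_compatible, reduced,
      (forall P, Fam P -> graded P),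
      (forall P, Fam P -> indecomposable P ->
         forall y : P, y != ptop P -> indecomposable (upper y)) &
      (forall n, (0 < n)%N ->
         (exists P, [/\ Fam P, indecomposable P & has_rank P n]) /\
         (forall P Q, Fam P -> Fam Q -> indecomposable P -> indecomposable Q ->
            has_rank P n -> has_rank Q n -> eqv P Q))]].

Variables (K : fieldType) (H : algType K) (cls : FinPoset -> H).

(* H is the K-algebra with basis the classes, product = class of the
   direct product, unit = class of a one-point poset. *)
Definition is_incidence_algebra : Prop :=
  [/\ (forall P Q, Fam P -> Fam Q -> (cls P = cls Q <-> eqv P Q)),
      (forall m (p : 'I_m -> FinPoset) (c : 'I_m -> K),
          (forall i, Fam (p i)) ->
          (forall i j, i != j -> ~ eqv (p i) (p j)) ->
          \sum_(i < m) c i *: cls (p i) = 0 -> forall i, c i = 0),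
      (forall h : H, exists m (p : 'I_m -> FinPoset) (c : 'I_m -> K),
          (forall i, Fam (p i)) /\ h = \sum_(i < m) c i *: cls (p i)),
      (forall P Q, Fam P -> Fam Q -> cls (prodP P Q) = cls P * cls Q) &
      (forall P, Fam P -> #|pcar P| = 1%N -> cls P = 1)].

Definition counit (P : FinPoset) : H := if #|pcar P| == 1%N then 1 else 0.

(* S is the antipode: the linear map with
   m (S (x) id) Delta = eta eps = m (id (x) S) Delta, where
   Delta(P) = sum_x [0_P,x] (x) [x,1_P]. *)
Definition is_antipode (S : {linear H -> H}) : Prop :=
  forall P, Fam P ->
    \sum_(x : pcar P) S (cls (lower x)) * cls (upper x) = counit P /\
    \sum_(x : pcar P) cls (lower x) * S (cls (upper x)) = counit P.
End Family.

(* Rank polynomial W_{m,k}, computed in the representative X m of x_m: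
   sum over z with rank [z,1] = k of the class of [0,z]. *)
Definition rankW (K : fieldType) (H : algType K) (cls : FinPoset -> H)
  (X : nat -> FinPoset) (m k : nat) : H :=
  \sum_(z : pcar (X m) | has_max_chain (upper z) k) cls (lower z).

(* Quasideterminant |A|_{1n} of an n x n matrix A with a_{i+1,i} = -1 *)
(* and a_{ij} = 0 for i > j+1, via the formula                         *)
(*  a_{1n} + sum_{k>=1} sum_{1<=j1<...<jk<n} a_{1j1} a_{j1+1,j2}...a_{jk+1,n} *)
(* (entries 1-indexed).                                                *)
Definition mxe (R : pzRingType) (n : nat) (A : 'M[R]_n) (i j : nat) : R :=
  match (insub i.-1 : option 'I_n), (insub j.-1 : option 'I_n) with
  | Some i', Some j' => A i' j'
  | _, _ => 0
  end.

(* breakpoints 0 = j0 < j1 < ... < jk < j_{k+1} = n *)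
Definition hess_breaks (n : nat) (J : {set 'I_n}) : seq nat :=
  0%N :: rcons (sort leq [seq val j | j in J]) n.

Definition qdet_hess_1n (R : pzRingType) (n : nat) (A : 'M[R]_n) : R :=
  \sum_(J : {set 'I_n} | [forall j in J, 0 < val j]%N)
     \prod_(pq <- zip (hess_breaks J) (behead (hess_breaks J)))
        mxe A pq.1.+1 pq.2.

(* Main.v *)
Require Import Defs.
From HB Require Import structures.
From mathcomp Require Import all_boot all_order all_algebra.
From mathcomp Require Import zify.
Import GRing.Theory.
Local Open Scope ring_scope.
Set Implicit Arguments. Unset Strict Implicit. Unset Printing Implicit Defensive.

Section Chains.
Variable P : FinPoset.
Local Notation le := (@ple P).

Definition schain (a b : P) (k : nat) : Prop :=
  exists s : seq P, [/\ size s = k, path (@pcover P) a s & last a s = b].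

Lemma cover_le (u v : P) : pcover u v -> le u v.
Proof. by case/and3P. Qed.

Lemma path_le (a : P) s : path (@pcover P) a s ->
  forall w, w \in a :: s -> le a w /\ le w (last a s).
Proof.
elim: s a => [|x s IH] a /=.
  by move=> _ w; rewrite inE => /eqP ->; rewrite ple_refl.
case/andP=> hax hp w; rewrite inE => /orP [/eqP ->|hw].
  split; first exact: ple_refl.
  have [h1 h2] := IH x hp x (mem_head _ _).
  exact: ple_trans (cover_le hax) h2.
have [h1 h2] := IH x hp w hw.
by split=> //; exact: ple_trans (cover_le hax) h1.
Qed.

Lemma schain_cat a b c k1 k2 : schain a b k1 -> schain b c k2 -> schain a c (k1 + k2).
Proof.
case=> s1 [h1 p1 l1] [s2 [h2 p2 l2]]; exists (s1 ++ s2); split.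
- by rewrite size_cat h1 h2.
- by rewrite cat_path p1 l1 p2.
- by rewrite last_cat l1.
Qed.

Lemma schain0 a b : schain a b 0 -> a = b.
Proof. by case=> s [/size0nil -> _ /= ->]. Qed.

Lemma schainS_neq a b k : schain a b k.+1 -> a != b.
Proof.
case=> s [hs hp hl]; case: s hs hp hl => [//|w s] _ /= /andP [hc hp] hl.
apply/eqP=> eab; rewrite -eab in hl.
have [_ h2] := path_le hp (mem_head _ _).
rewrite hl in h2.
move: hc; rewrite /pcover => /and3P [hne h1 _].
by move: hne; rewrite (ple_anti (introT andP (conj h1 h2))) eqxx.
Qed.

Lemma schain_ex a b : le a b -> exists k, schain a b k.
Proof.
move=> hab.
have: (#|[set z | le a z && le z b]| <= #|[set z | le a z && le z b]|)%N by [].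
move: {2}#|_| => N; elim: N a hab => [|N IH] a hab hN.
  have : (0 < #|[set z | le a z && le z b]|)%N.
    by apply/card_gt0P; exists a; rewrite inE ple_refl hab.
  by rewrite ltnNge hN.
case: (eqVneq a b) => [<-|hne]; first by exists 0%N, [::].
pose A := [pred z | (z != a) && le a z && le z b].
have hbA : b \in A by rewrite inE eq_sym hne hab ple_refl.
pose c := [arg min_(z < b in A) #|[set w | le a w && le w z]|].
have [c' hc' hmin] : exists2 c', c' \in A &
   forall z, z \in A -> (#|[set w | le a w && le w c']| <= #|[set w | le a w && le w z]|)%N.
  by case: (arg_minnP (fun z => #|[set w | le a w && le w z]|) hbA) => c1 hc1 hm; exists c1.
move: hc'; rewrite inE => /andP [/andP [hca hac] hcb].
have hcov : pcover a c'.
  rewrite /pcover eq_sym hca hac /=; apply/forallP => z; apply/negP => /and4P [hza hzc haz hzc'].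
  have hzA : z \in A by rewrite inE hza haz (ple_trans hzc' hcb).
  have := hmin z hzA.
  suff : ([set w | le a w && le w z] \proper [set w | le a w && le w c'])
    by move/proper_card; rewrite ltnNge => /negP.
  apply/properP; split.
    by apply/subsetP => w; rewrite !inE => /andP [h1 h2]; rewrite h1 (ple_trans h2 hzc').
  exists c'; first by rewrite inE hac ple_refl.
  rewrite inE hac /=; apply/negP => hcz.
  by move/eqP: hzc; apply; apply: ple_anti; rewrite hzc' hcz.
have [k [s [hs hp hl]]] : exists k, schain c' b k.
  apply: IH => //; rewrite -ltnS; apply: leq_trans hN; apply: proper_card.
  apply/properP; split.
    by apply/subsetP => w; rewrite !inE => /andP [h1 h2]; rewrite h2 (ple_trans hac h1).
  exists a; first by rewrite inE ple_refl hab.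
  rewrite inE /=; apply/negP => /andP [hca' _].
  by move/eqP: hca; apply; apply: ple_anti; rewrite hca' hac.
exists k.+1, (c' :: s); split => //=; first by rewrite hs.
by rewrite hcov hp.
Qed.

Lemma hmc_schain k : has_max_chain P k <-> schain (pbot P) (ptop P) k.
Proof.
split.
  by case/existsP => t /andP [hp /eqP hl]; exists t; rewrite size_tuple.
case=> s [hs hp hl]; apply/existsP.
have hs' : size s == k by apply/eqP.
by exists (Tuple hs'); rewrite /= hp hl eqxx.
Qed.

End Chains.

Section Int.
Variables (P : FinPoset) (x y : P) (h : @ple P x y).
Local Notation le := (@ple P).

Lemma cover_int (u v : Defs.interval h) : pcover u v = pcover (val u) (val v).
Proof.
rewrite /pcover /= -val_eqE; congr [&& _, _ & _].
apply/forallP/forallP => H z.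
  apply/negP => /and4P [h1 h2 h3 h4].
  have hz : le x z && le z y.
    case/andP: (valP u) => hu _; case/andP: (valP v) => _ hv.
    by rewrite (ple_trans hu h3) (ple_trans h4 hv).
  have := H (exist _ z hz); rewrite /int_le /= -!val_eqE /= h1 h2 h3 h4.
  by [].
apply/negP => /and4P [h1 h2 h3 h4].
move: h3 h4; rewrite /= /int_le => h3 h4.
have := H (val z); by rewrite !val_eqE h1 h2 h3 h4.
Qed.

Lemma path_int (u : Defs.interval h) s :
  path (@pcover _) u s = path (@pcover P) (val u) (map val s).
Proof. by elim: s u => [|v s IH] u //=; rewrite cover_int IH. Qed.

Lemma lift_path (u : Defs.interval h) s : path (@pcover P) (val u) s -> last (val u) s = y ->
  exists s' : seq (Defs.interval h), map val s' = s.
Proof.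
elim: s u => [|w s IH] u; first by exists [::].
move=> /= /andP [hc hp] hl.
have hw : le x w && le w y.
  case/andP: (valP u) => hu _.
  have [_ h2] := path_le hp (mem_head _ _).
  by rewrite (ple_trans hu (cover_le hc)) -hl h2.
have [s' hs'] := IH (exist _ w hw) hp hl.
by exists (exist _ w hw :: s'); rewrite /= hs'.
Qed.

Lemma hmc_int k : has_max_chain (Defs.interval h) k <-> schain x y k.
Proof.
rewrite hmc_schain; split.
  case=> s [hs hp hl]; exists (map val s); split.
  - by rewrite size_map.
  - by move: hp; rewrite path_int.
  - by rewrite (last_map val s (int_bot h)) hl.
case=> s [hs hp hl].
have [s' hs'] := lift_path (u := int_bot h) hp hl.
exists s'; split.
- by rewrite -hs -hs' size_map.
- by rewrite path_int hs'.
- apply: val_inj; by rewrite /= -(last_map val s' (int_bot h)) hs' hl.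
Qed.

End Int.

Section Chains2.
Variable P : FinPoset.
Local Notation le := (@ple P).

Lemma card_int1 (a b : P) (hab : le a b) : (forall w, le a w -> le w b -> w = a) ->
  #|pcar (Defs.interval hab)| = 1%N.
Proof.
move=> H; apply/eqP; rewrite eqn_leq; apply/andP; split.
  apply/fintype_le1P => u v; apply: val_inj => /=.
  case/andP: (valP u) => h1 h2; case/andP: (valP v) => h3 h4.
  by rewrite (H _ h1 h2) (H _ h3 h4).
by apply/card_gt0P; exists (int_bot hab).
Qed.

Lemma card_int_le1 (a b : P) (hab : le a b) : (#|pcar P| <= 1)%N ->
  #|pcar (Defs.interval hab)| = 1%N.
Proof.
move=> /fintype_le1P hz; apply: card_int1 => w _ _; exact: hz.
Qed.

End Chains2.
Section QD.
Variables (R : pzRingType) (n : nat) (i0 : 'I_n) (e : nat -> nat -> R).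

Definition sortJ (J : {set 'I_n}) := sort leq [seq val j | j in J].
Definition term (a : nat) (s : seq nat) : R :=
  \prod_(pq <- zip (a :: rcons s n) (rcons s n)) e pq.1.+1 pq.2.
Definition Pa (a : nat) (J : {set 'I_n}) := [forall j in J, (a < val j)%N].
Definition Fq (a : nat) : R := \sum_(J : {set 'I_n} | Pa a J) term a (sortJ J).

Lemma term_nil a : term a [::] = e a.+1 n.
Proof. by rewrite /term /= big_seq1. Qed.

Lemma term_cons a m s : term a (m :: s) = e a.+1 m * term m s.
Proof. by rewrite /term /= big_cons. Qed.

Lemma sortJ0 : sortJ set0 = [::].
Proof. by rewrite /sortJ /image_mem enum_set0. Qed.

Lemma sortJU1 (m : 'I_n) (J : {set 'I_n}) : (forall j, j \in J -> (m < j)%N) ->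
  sortJ (m |: J) = val m :: sortJ J.
Proof.
move=> H.
have hmJ : m \notin J by apply/negP => /H; rewrite ltnn.
apply: (sorted_eq leq_trans anti_leq (sort_sorted leq_total _)).
  rewrite /= path_sortedE; last exact: leq_trans.
  rewrite all_sort sort_sorted ?andbT; last exact: leq_total.
  apply/allP => x /mapP [j]; rewrite mem_enum => hj ->.
  exact: ltnW (H j hj).
rewrite /sortJ perm_sort.
apply: (@perm_trans _ (val m :: [seq val j | j in J])).
  change (perm_eq (map val (enum (m |: J))) (map val (m :: enum J))).
  apply: perm_map; apply: uniq_perm.
  - exact: enum_uniq.
  - by rewrite /= mem_enum hmJ enum_uniq.
  - by move=> x; rewrite mem_enum !inE mem_enum.
by rewrite perm_cons perm_sym perm_sort.
Qed.

Definition minJ (J : {set 'I_n}) : 'I_n :=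
  [arg min_(i < odflt i0 [pick i in J] in J) val i].

Lemma minJP J : J != set0 -> minJ J \in J /\ forall j, j \in J -> (minJ J <= j)%N.
Proof.
move=> hJ; rewrite /minJ; case: pickP => [i1 hi1 | hnone] /=.
  by case: (arg_minnP (fun i : 'I_n => val i) hi1) => j hj hm; split.
by case/set0Pn: hJ => x; rewrite hnone.
Qed.

Lemma Fq_rec a : Fq a = e a.+1 n + \sum_(m : 'I_n | (a < m)%N) e a.+1 m * Fq m.
Proof.
have hP0 : Pa a set0 by apply/forallP => j; rewrite inE.
rewrite /Fq (bigD1 set0) //= sortJ0 term_nil; congr (_ + _).
symmetry; under eq_bigr => m _ do rewrite mulr_sumr.
rewrite pair_big_dep.
rewrite [RHS](reindex_onto (fun p : 'I_n * {set 'I_n} => p.1 |: p.2)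
   (fun J => (minJ J, J :\ minJ J))); last first.
  move=> J /andP [_ hJ] /=; by rewrite setD1K //; case: (minJP hJ).
apply: eq_big => [[m J']|[m J'] /andP [ham hJ']] /=; last first.
  rewrite sortJU1 ?term_cons //.
  by move=> j hj; move: hJ' => /forallP /(_ j); rewrite hj.
apply/idP/idP; last first.
  move=> /andP [/andP [hPa hne] /eqP [hmin hD]].
  have [hmem hle] := minJP hne.
  rewrite hmin in hmem hle.
  apply/andP; split.
    by move: hPa => /forallP /(_ m); rewrite setU11.
  apply/forallP => j; apply/implyP => hj.
  rewrite -hD in hj; move: hj; rewrite hmin !inE => /andP [hjm hj].
  have := hle j; rewrite !inE hj => /(_ isT).
  by move=> hmj; rewrite ltn_neqAle hmj andbT eq_sym val_eqE.
move=> /andP [ham hJ'].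
have hlt : forall j, j \in J' -> (m < j)%N.
  by move=> j hj; move: hJ' => /forallP /(_ j); rewrite hj.
have hmJ : m \notin J' by apply/negP => /hlt; rewrite ltnn.
have hne : m |: J' != set0 by apply/set0Pn; exists m; rewrite setU11.
have hmin : minJ (m |: J') = m.
  have [hmem hle] := minJP hne.
  apply/val_inj/eqP; rewrite eqn_leq hle ?setU11 //=.
  move: hmem; rewrite !inE => /orP [/eqP -> //|/hlt]; exact: ltnW.
rewrite hne hmin setU1K // eqxx !andbT.
apply/forallP => j; apply/implyP; rewrite !inE => /orP [/eqP -> //|/hlt].
exact: ltn_trans.
Qed.

End QD.

Section Main.
Variables (Fam : FinPoset -> Prop) (eqv : FinPoset -> FinPoset -> Prop)
  (hU : uniform_family Fam eqv)
  (K : fieldType) (H : algType K) (cls : FinPoset -> H)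
  (hH : is_incidence_algebra Fam eqv cls)
  (S : {linear H -> H}) (hS : is_antipode Fam cls S)
  (X : nat -> FinPoset)
  (hX : forall m, (0 < m)%N ->
          [/\ Fam (X m), indecomposable Fam eqv (X m) & has_rank (X m) m]).

Lemma famI (P : FinPoset) (x y : P) (h : ple x y) : Fam P -> Fam (Defs.interval h).
Proof. by case: hU => hic _ _ _ _ hP; apply: hic. Qed.

Lemma gradedF P : Fam P -> graded P.
Proof. by case: hU => _ _ _ _ [_ _ hg _ _]; apply: hg. Qed.

Lemma cls1 P : Fam P -> #|pcar P| = 1%N -> cls P = 1.
Proof. by case: hH => _ _ _ _ h1; apply: h1. Qed.

Lemma S1 : S 1 = 1.
Proof.
have [hF1 _ _] := @hX 1%N isT.
pose P0 := lower (pbot (X 1%N)).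
have hF0 : Fam P0 by apply: famI.
have hc0 : #|pcar P0| = 1%N.
  apply: card_int1 => w _ hw; apply: ple_anti; by rewrite hw pbot_min.
have hall : forall x : P0, x = pbot P0.
  by move: (eqxx #|pcar P0|); rewrite {2}hc0 => /eqP /eq_leq /fintype_le1P h x; apply: h.
have [h _] := hS hF0.
rewrite (big_pred1 (pbot P0)) in h; last by move=> x; rewrite /= (hall x) eqxx.
have hle : (#|pcar P0| <= 1)%N by rewrite hc0.
rewrite /counit hc0 eqxx in h.
rewrite (cls1 (famI _ hF0) (card_int_le1 _ hle)) in h.
by rewrite (cls1 (famI _ hF0) (card_int_le1 _ hle)) mulr1 in h.
Qed.

Definition T (k : nat) : H := if k is k'.+1 then S (cls (X k'.+1)) else 1.

Lemma antipode_rec p : (0 < p)%N ->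
  T p = - \sum_(k < p) rankW cls X p k * T k.
Proof.
move=> hp.
have [hFP hindP [hgrP hmcP]] := @hX p hp.
set P := X p in hFP hindP hgrP hmcP *.
have schP : schain (pbot P) (ptop P) p by apply/hmc_schain.
have bound : forall (z : P) k, schain z (ptop P) k -> exists r, (r + k = p)%N /\ schain (pbot P) z r.
  move=> z k hk; have [r hr] := schain_ex (pbot_min z); exists r; split => //.
  apply: (hgrP _ _ _ hmcP); apply/hmc_schain; exact: schain_cat hr hk.
have uniq_rk : forall (z : P) k1 k2, has_max_chain (upper z) k1 -> has_max_chain (upper z) k2 -> k1 = k2.
  by move=> z; apply: gradedF; apply: famI.
have step : forall x : P, cls (lower x) * S (cls (upper x)) =
    \sum_(k < p.+1 | has_max_chain (upper x) k) cls (lower x) * T k.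
  move=> x.
  have [k0 hk0] := schain_ex (ptop_max x).
  have [r [hr _]] := bound _ _ hk0.
  have hk0p : (k0 < p.+1)%N by rewrite ltnS -hr leq_addl.
  rewrite (big_pred1 (Ordinal hk0p)); last first.
    move=> k /=; apply/idP/eqP.
      move=> hk; apply: val_inj => /=; apply: uniq_rk hk _.
      exact/hmc_int.
    by move=> ->; apply/hmc_int.
  congr (_ * _) => /=.
  case: k0 hk0 {hk0p hr} => [|k] hk0 /=.
    have ex := schain0 hk0; subst x.
    rewrite (cls1 (famI _ hFP)) ?S1 //.
    apply: card_int1 => w hw _; apply: ple_anti; by rewrite hw ptop_max.
  have hne := schainS_neq hk0.
  have [hFk hindk hrk] := @hX k.+1 isT.
  case: hU => _ _ _ _ [_ _ _ hind hrk1].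
  have hFu : Fam (upper x) by apply: famI.
  have hindu := hind P hFP hindP x hne.
  have heqv : eqv (upper x) (X k.+1).
    apply: ((hrk1 k.+1 isT).2) => //.
    split; first exact: gradedF.
    exact/hmc_int.
  case: hH => hcls _ _ _ _.
  by rewrite ((hcls _ _ hFu hFk).2 heqv).
have hsum := (hS hFP).2.
have hcount : counit H P = 0.
  rewrite /counit; case: eqP => // hc.
  have hne : pbot P != ptop P by apply: (@schainS_neq P _ _ p.-1); rewrite prednK.
  exfalso; move/eqP: hne; apply.
  by move: (eqxx #|pcar P|); rewrite {2}hc => /eqP /eq_leq /fintype_le1P h; apply: h.
rewrite hcount in hsum.
rewrite (eq_bigr _ (fun x _ => step x)) in hsum.
rewrite (exchange_big_dep xpredT) //= in hsum.
have hW : forall k : 'I_p.+1, \sum_(x : P | true && has_max_chain (upper x) k) cls (lower x) * T k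
   = rankW cls X p k * T k.
  move=> k; rewrite /rankW -mulr_suml; apply: congr2 => //.
rewrite (eq_bigr _ (fun k _ => hW k)) in hsum.
rewrite big_ord_recr /= in hsum.
have hWp : rankW cls X p p = 1.
  rewrite /rankW (big_pred1 (pbot P)); last first.
    move=> z /=; apply/idP/eqP.
      move/hmc_int => hz; have [r [hr hr']] := bound _ _ hz.
      have r0 : r = 0%N by lia.
      by rewrite r0 in hr'; rewrite (schain0 hr').
    by move=> ->; apply/hmc_int.
  apply: cls1; first exact: famI.
  by apply: card_int1 => w _ hw; apply: ple_anti; rewrite hw pbot_min.
rewrite hWp mul1r in hsum.
by apply/eqP; rewrite -addr_eq0 addrC hsum.
Qed.

Lemma final (n : nat) (hn : (0 < n)%N) :
  let M : 'M[H]_n := \matrix_(i < n, j < n) rankW cls X (n - i) (n - j.+1) in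
  S (cls (X n)) = qdet_hess_1n (- M).
Proof.
move=> M.
pose e := mxe (-M).
have e_val : forall a m, (a < n)%N -> (0 < m <= n)%N ->
    e a.+1 m = - rankW cls X (n - a) (n - m).
  move=> a m ha /andP [hm0 hmn]; rewrite /e /mxe /=.
  case: insubP => [i _ hi|/negP]; last by rewrite ha.
  case: insubP => [j _ hj|/negP]; last by case; lia.
  have hi' : nat_of_ord i = a := hi.
  have hj' : nat_of_ord j = m.-1 := hj.
  rewrite !mxE hi' hj'; congr (- rankW _ _ _ _); lia.
have FqT : forall d a, (n - a < d)%N -> (a < n)%N -> Fq n e a = T (n - a).
  elim=> [|d IH] a hd ha; first by [].
  rewrite (Fq_rec (Ordinal hn)).
  rewrite (eq_bigr (fun m : 'I_n => e a.+1 m * T (n - m))); last first.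
    move=> m ham; rewrite IH //; lia.
  have [p' Ep] : exists p', (n - a = p'.+1)%N by exists (n - a).-1; lia.
  rewrite Ep (antipode_rec (isT : (0 < p'.+1)%N)) e_val ?leqnn ?andbT // subnn Ep.
  rewrite (eq_bigr (fun m : 'I_n => - (rankW cls X p'.+1 (n - m) * T (n - m)))); last first.
    move=> m ham; have hmn := ltn_ord m; have hm : (0 < m <= n)%N by apply/andP; split; lia.
    by rewrite e_val // Ep mulNr.
  rewrite big_ord_recl /= mulr1 opprD sumrN; congr (_ + _); congr (- _).
  set G := fun k => rankW cls X p'.+1 k * T k.
  rewrite (eq_bigr (fun i : 'I_p' => G i.+1)); last by move=> i _; rewrite ?lift0.
  rewrite (eq_bigr (fun m : 'I_n => G (n - m)%N)) //.
  rewrite -(big_mkord xpredT (fun i => G i.+1)).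
  transitivity (\sum_(a.+1 <= m < n) G (n - m)%N).
    by rewrite big_geq_mkord; apply: eq_bigl.
  rewrite -{1}[a.+1]add0n big_addn big_nat_rev.
  have -> : (n - a.+1 = p')%N by lia.
  apply: eq_big_nat => i /andP [_ hi]; congr G; lia.
have hF := FqT (n - 0).+1 0%N (ltnSn _) hn.
rewrite subn0 in hF.
have -> : qdet_hess_1n (-M) = Fq n e 0 by [].
rewrite hF; move: (n) hn; by case.
Qed.

End Main.

Theorem mainTheorem2
  (Fam : FinPoset -> Prop) (eqv : FinPoset -> FinPoset -> Prop)
  (hU : uniform_family Fam eqv)
  (K : fieldType) (H : algType K) (cls : FinPoset -> H)
  (hH : is_incidence_algebra Fam eqv cls)
  (S : {linear H -> H}) (hS : is_antipode Fam cls S)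
  (X : nat -> FinPoset)
  (hX : forall m, (0 < m)%N ->
          [/\ Fam (X m), indecomposable Fam eqv (X m) & has_rank (X m) m])
  (n : nat) (hn : (0 < n)%N) :
  let M : 'M[H]_n := \matrix_(i < n, j < n) rankW cls X (n - i) (n - j.+1) in
  S (cls (X n)) = qdet_hess_1n (- M).
Proof. exact: (final hU hH hS hX hn). Qed.
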